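(* Let $\mu>0$ and let $G:\mathbb{R}^n_+\to\mathbb{R}_+$ be a generalized extreme value generating function, i.e. (G1) $G$ is homogeneous of degree $1/\mu$; (G2) $G(x)\to\infty$ as $x^{(i)}\to\infty$ for each $i$; (G3) every mixed partial derivative of $G$ with respect to $k$ distinct variables is $\ge 0$ if $k$ is odd and $\le 0$ if $k$ is even. Suppose there is a constant $\tilde C\in(-1,\infty)$ such that for all $i=1,\dots,n$ and all $x\in\mathbb{R}^n_+$, \[ \frac{\partial^2 G(x)}{\partial x^{(i)2}}\cdot x^{(i)}\le \tilde C\cdot\frac{\partial G(x)}{\partial x^{(i)}}. \] Then for all $x\in\mathbb{R}^n_+$, \[ \sum_{i=1}^n\frac{\partial^2 G(x)}{\partial x^{(i)2}}\cdot (x^{(i)})^2\le M\cdot G(x)\quad\text{with } M=\frac{\tilde C}{\mu}. \]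
   Context: $\mathbb{R}^n_+$ is the set of vectors in $\mathbb{R}^n$ with nonnegative components. *)

(* Defs.v *)
From HB Require Import structures.
From mathcomp Require Import all_boot all_order all_algebra.
From mathcomp Require Import all_classical all_reals all_analysis.
Set Implicit Arguments. Unset Strict Implicit. Unset Printing Implicit Defensive.
Import Order.TTheory GRing.Theory Num.Theory.
Import numFieldNormedType.Exports.
Local Open Scope ring_scope.

Definition unitv (R : realType) (n : nat) (i : 'I_n) : 'rV[R]_n := delta_mx 0 i.

Definition nonneg_orthant (R : realType) (n : nat) (x : 'rV[R]_n) : Prop :=
  forall i : 'I_n, 0 <= x ord0 i.
Definition pos_orthant (R : realType) (n : nat) (x : 'rV[R]_n) : Prop :=
  forall i : 'I_n, 0 < x ord0 i.

Definition partial (R : realType) (n : nat) (i : 'I_n)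
  (f : 'rV[R]_n -> R) : 'rV[R]_n -> R :=
  fun x => 'D_(unitv R i) f x.

(* iterated (mixed) partial derivative: mpartial [:: i1; ...; ik] f
   = d/dx_i1 ( ... (d/dx_ik f)) *)
Definition mpartial (R : realType) (n : nat) (s : seq 'I_n)
  (f : 'rV[R]_n -> R) : 'rV[R]_n -> R :=
  foldr (fun i g => partial i g) f s.

(* Main.v *)
Require Import Defs.
From HB Require Import structures.
From mathcomp Require Import all_boot all_order all_algebra.
From mathcomp Require Import all_classical all_reals all_analysis.
From mathcomp Require Import ring lra.
Import Order.TTheory GRing.Theory Num.Theory.
Import numFieldNormedType.Exports.
Local Open Scope classical_set_scope.
Local Open Scope ring_scope.
Set Implicit Arguments. Unset Strict Implicit.

Lemma unitvE (R : realType) (n : nat) (i j : 'I_n) :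
  unitv R i ord0 j = (i == j)%:R.
Proof. by rewrite /unitv mxE /= eq_sym. Qed.

Lemma coordD (R : realType) (n : nat) (z : 'rV[R]_n) (s : R) (i j : 'I_n) :
  (z + s *: unitv R i) ord0 j = z ord0 j + s * (i == j)%:R.
Proof. by rewrite !mxE /= eq_sym. Qed.

Lemma line_is_derive (R : realType) (n : nat) (f : 'rV[R]_n -> R)
   (z : 'rV[R]_n) (i : 'I_n) (s : R) :
  derivable f (z + s *: unitv R i) (unitv R i) ->
  is_derive s 1 (fun t : R => f (z + t *: unitv R i))
     ('D_(unitv R i) f (z + s *: unitv R i)).
Proof.
move=> d.
have E : (fun h : R => h^-1 *: (((fun t : R => f (z + t *: unitv R i)) \o shift s) (h *: 1)
   - (fun t : R => f (z + t *: unitv R i)) s)) = 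
   (fun h => h^-1 *: ((f \o shift (z + s *: unitv R i)) (h *: unitv R i) - f (z + s *: unitv R i))).
  apply/funext => h /=; congr (_ *: (f _ - _)).
  by rewrite /shift /= [h%:A]mulr1 scalerDl addrCA.
have d' : derivable (fun t : R => f (z + t *: unitv R i)) s 1 by rewrite /derivable E.
have <- : 'D_1 (fun t : R => f (z + t *: unitv R i)) s = 'D_(unitv R i) f (z + s *: unitv R i).
  by rewrite /derive E.
exact: derivableP.
Qed.

Lemma line_MVT (R : realType) (n : nat) (f : 'rV[R]_n -> R)
   (z : 'rV[R]_n) (i : 'I_n) (a b : R) : a <= b ->
  (forall s, a <= s <= b -> derivable f (z + s *: unitv R i) (unitv R i)) ->
  exists2 c, a <= c <= b & f (z + b *: unitv R i) - f (z + a *: unitv R i)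
     = 'D_(unitv R i) f (z + c *: unitv R i) * (b - a).
Proof.
move=> ab d.
have := @MVT_segment R (fun t : R => f (z + t *: unitv R i))
  (fun s => 'D_(unitv R i) f (z + s *: unitv R i)) a b ab.
case.
- move=> s; rewrite in_itv /= => /andP[hs1 hs2].
  by apply: (@line_is_derive R n); apply: d; rewrite !ltW.
- apply: derivable_within_continuous => s; rewrite in_itv /= => sab.
  by have [] := @line_is_derive R n f z i s (d s sab).
by move=> c; rewrite in_itv /= => cab E; exists c.
Qed.

Lemma line_nonincr (R : realType) (n : nat) (f : 'rV[R]_n -> R)
   (z : 'rV[R]_n) (i : 'I_n) (c : R) : 0 <= c ->
  (forall s, 0 <= s <= c -> derivable f (z + s *: unitv R i) (unitv R i)
      /\ 'D_(unitv R i) f (z + s *: unitv R i) <= 0) ->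
  f (z + c *: unitv R i) <= f z.
Proof.
move=> c0 d.
have [s sc E] := @line_MVT R n f z i 0 c c0 (fun s hs => (d s hs).1).
rewrite -subr_le0 -[X in _ - f X](addr0 z) -(scale0r (unitv R i)) E subr0.
by rewrite mulr_le0_ge0 // (d s sc).2.
Qed.

Lemma anti_coords (R : realType) (n : nat) (f : 'rV[R]_n -> R) (k : 'I_n) :
  (forall (j : 'I_n) w c, j != k -> pos_orthant w -> 0 <= c ->
     f (w + c *: unitv R j) <= f w) ->
  forall u w : 'rV[R]_n, pos_orthant u -> (forall j, u ord0 j <= w ord0 j) ->
    u ord0 k = w ord0 k -> f w <= f u.
Proof.
move=> Hm u w pu uw uwk.
pose v (m : nat) : 'rV[R]_n := \row_j (if (j < m)%N then w ord0 j else u ord0 j).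
have pv m : pos_orthant (v m).
  move=> j; rewrite mxE; case: ifP => _ //; exact: lt_le_trans (pu j) (uw j).
have H m : (m <= n)%N -> f (v m) <= f u.
  elim: m => [_|m IH mn].
    by have -> : v 0%N = u by apply/rowP => j; rewrite mxE.
  pose mo : 'I_n := Ordinal mn.
  have -> : v m.+1 = v m + (w ord0 mo - u ord0 mo) *: unitv R mo.
    apply/rowP => j; rewrite coordD !mxE ltnS leq_eqVlt.
    case: (eqVneq mo j) => [<-|nj] /=; first by rewrite eqxx ltnn mulr1 addrC subrK.
    have -> : (nat_of_ord j == m) = false by apply/negbTE; apply: contra nj => /eqP jm; apply/eqP/val_inj.
    by rewrite mulr0 addr0.
  case: (eqVneq mo k) => [mk|mk].
    by rewrite mk uwk subrr scale0r addr0 IH // ltnW.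
  apply: le_trans (IH (ltnW mn)); apply: Hm => //; rewrite subr_ge0; exact: uw.
have -> : w = v n by apply/rowP => j; rewrite mxE ltn_ord.
exact: H.
Qed.

Lemma pos_addD (R : realType) (n : nat) (w : 'rV[R]_n) (j : 'I_n) (c : R) :
  pos_orthant w -> 0 <= c -> pos_orthant (w + c *: unitv R j).
Proof.
move=> pw c0 i; rewrite coordD; apply: (lt_le_trans (pw i)).
by rewrite lerDl mulr_ge0.
Qed.

Lemma mono_partial (R : realType) (n : nat) (G : 'rV[R]_n -> R) :
  (forall (s : seq 'I_n) (i : 'I_n) x, pos_orthant x ->
     derivable (mpartial s G) x (unitv R i)) ->
  (forall (s : seq 'I_n) x, pos_orthant x -> uniq s -> (0 < size s)%N ->
     if odd (size s) then 0 <= mpartial s G x else mpartial s G x <= 0) ->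
  forall (k j : 'I_n) w c, j != k -> pos_orthant w -> 0 <= c ->
    partial k G (w + c *: unitv R j) <= partial k G w.
Proof.
move=> Hd H3 k j w c jk pw c0.
apply: (@line_nonincr R n (partial k G) w j c c0) => s /andP[s0 _]; split.
  exact: (Hd [:: k] j _ (pos_addD j pw s0)).
have := H3 [:: j; k] _ (pos_addD j pw s0); rewrite /= inE jk /=.
by move=> /(_ isT isT).
Qed.

Lemma pos_line (R : realType) (n : nat) (w : 'rV[R]_n) (j : 'I_n) (c : R) :
  pos_orthant w -> 0 < w ord0 j + c -> pos_orthant (w + c *: unitv R j).
Proof.
move=> pw c0 i; rewrite coordD; case: (eqVneq j i) => [<-|ji].
  by rewrite mulr1.
by rewrite mulr0 addr0.
Qed.

Definition pathv (R : realType) (n : nat) (x : 'rV[R]_n) (hh : R) (m : nat)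
  : 'rV[R]_n := \row_j (if (j < m)%N then (1 + hh) * x ord0 j else x ord0 j).

Lemma pathv0 (R : realType) (n : nat) (x : 'rV[R]_n) hh : pathv x hh 0 = x.
Proof. by apply/rowP => j; rewrite mxE. Qed.

Lemma pathvn (R : realType) (n : nat) (x : 'rV[R]_n) hh :
  pathv x hh n = (1 + hh) *: x.
Proof. by apply/rowP => j; rewrite !mxE ltn_ord. Qed.

Lemma pathvS (R : realType) (n : nat) (x : 'rV[R]_n) hh (k : 'I_n) :
  pathv x hh k.+1 = pathv x hh k + (hh * x ord0 k) *: unitv R k.
Proof.
apply/rowP => j; rewrite coordD !mxE ltnS leq_eqVlt.
case: (eqVneq k j) => [<-|nj] /=.
  by rewrite eqxx ltnn mulr1 mulrDl mul1r.
have -> : (nat_of_ord j == k) = false.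
  by apply/negbTE; apply: contra nj => /eqP jm; apply/eqP/val_inj.
by rewrite mulr0 addr0.
Qed.

Lemma pathv_k (R : realType) (n : nat) (x : 'rV[R]_n) hh (k : 'I_n) :
  pathv x hh k ord0 k = x ord0 k.
Proof. by rewrite mxE ltnn. Qed.

Lemma pos_pathv (R : realType) (n : nat) (x : 'rV[R]_n) hh m :
  pos_orthant x -> -1 < hh -> pos_orthant (pathv x hh m).
Proof.
move=> px hh1 j; rewrite mxE; case: ifP => _; last exact: px.
apply: mulr_gt0 => //; lra.
Qed.

Lemma pathv_ge (R : realType) (n : nat) (x : 'rV[R]_n) hh m j :
  pos_orthant x -> 0 <= hh -> x ord0 j <= pathv x hh m ord0 j.
Proof.
move=> px hh0; rewrite mxE; case: ifP => _ //.
by rewrite mulrDl mul1r lerDl mulr_ge0 // ltW.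
Qed.

Lemma pathv_le (R : realType) (n : nat) (x : 'rV[R]_n) hh m j :
  pos_orthant x -> hh <= 0 -> pathv x hh m ord0 j <= x ord0 j.
Proof.
move=> px hh0; rewrite mxE; case: ifP => _ //.
by rewrite mulrDl mul1r gerDl mulr_le0_ge0 // ltW.
Qed.

Lemma term_bound (R : realType) (n : nat) (G : 'rV[R]_n -> R) :
  (forall (s : seq 'I_n) (i : 'I_n) x, pos_orthant x ->
     derivable (mpartial s G) x (unitv R i)) ->
  (forall (s : seq 'I_n) x, pos_orthant x -> uniq s -> (0 < size s)%N ->
     if odd (size s) then 0 <= mpartial s G x else mpartial s G x <= 0) ->
  forall x (k : 'I_n) hh eps, pos_orthant x -> -1 < hh ->
  (forall c, `|c| <= `|hh| * x ord0 k ->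
      `|partial k G x - partial k G (x + c *: unitv R k)| < eps) ->
  (0 < hh -> G (pathv x hh k.+1) - G (pathv x hh k)
                <= hh * (x ord0 k * (partial k G x + eps))) /\
  (hh < 0 -> G (pathv x hh k.+1) - G (pathv x hh k)
                <= hh * (x ord0 k * (partial k G x - eps))).
Proof.
move=> Hd H3 x k hh eps px hh1 Hc.
have Hm := mono_partial Hd H3.
set z := pathv x hh k.
have pz : pos_orthant z by exact: pos_pathv.
have xk := px k.
rewrite pathvS -/z; split => hpos.
- have ab : 0 <= hh * x ord0 k by rewrite mulr_ge0 // ltW.
  have [c /andP[c0 c1] E] := @line_MVT R n G z k 0 (hh * x ord0 k) ab
     (fun s hs => Hd [::] k _ (pos_addD k pz (proj1 (andP hs)))).
  rewrite -[X in _ - G X](addr0 z) -(scale0r (unitv R k)) E subr0.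
  have Hle : 'D_(unitv R k) G (z + c *: unitv R k) <= partial k G x + eps.
    apply: (@le_trans _ _ (partial k G (x + c *: unitv R k))).
      apply: (anti_coords (Hm k)); first exact: pos_addD.
        by move=> j; rewrite !coordD lerD2r pathv_ge // ltW.
      by rewrite !coordD pathv_k.
    have := Hc c; rewrite ger0_norm // gtr0_norm // => /(_ c1).
    rewrite distrC => h; have := ler_norm (partial k G (x + c *: unitv R k) - partial k G x).
    lra.
  have := ler_wpM2r ab Hle => h; apply: (le_trans h).
  by rewrite le_eqVlt; apply/orP; left; apply/eqP; ring.
- have ab : hh * x ord0 k <= 0 by rewrite mulr_le0_ge0 // ltW.
  have pl s : hh * x ord0 k <= s -> pos_orthant (z + s *: unitv R k).
    move=> hs; apply: pos_line => //; rewrite /z pathv_k.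
    have : 0 < (1 + hh) * x ord0 k by apply: mulr_gt0 => //; lra.
    rewrite mulrDl mul1r => h; lra.
  have [c /andP[c0 c1] E] := @line_MVT R n G z k (hh * x ord0 k) 0 ab
     (fun s hs => Hd [::] k _ (pl s (proj1 (andP hs)))).
  have E' : G (z + hh * x ord0 k *: unitv R k) - G z =
      'D_(unitv R k) G (z + c *: unitv R k) * (hh * x ord0 k).
    by rewrite -[X in _ - G X](addr0 z) -(scale0r (unitv R k)) -opprB E; ring.
  rewrite E'.
  have Hle : partial k G x - eps <= 'D_(unitv R k) G (z + c *: unitv R k).
    apply: (@le_trans _ _ (partial k G (x + c *: unitv R k))); last first.
      apply: (anti_coords (Hm k)); first exact: pl.
        by move=> j; rewrite !coordD lerD2r pathv_le // ltW.
      by rewrite !coordD pathv_k.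
    have hc : `|c| <= `|hh| * x ord0 k.
      by rewrite ler0_norm // ltr0_norm // mulNr lerN2.
    have h := Hc c hc.
    have := ler_norm (partial k G x - partial k G (x + c *: unitv R k)).
    lra.
  have := ler_wnM2r ab Hle => h; apply: (le_trans h).
  by rewrite le_eqVlt; apply/orP; left; apply/eqP; ring.
Qed.

Lemma dnbhs_right (R : realType) (f : R -> R) (l : R) :
  f @ 0^' --> l -> f @ 0^'+ --> l.
Proof.
move=> cv A /cv /nbhs_ballP [e e0 H].
by exists e => //= y ye /gt_eqF/negbT; exact: H.
Qed.

Lemma dnbhs_left (R : realType) (f : R -> R) (l : R) :
  f @ 0^' --> l -> f @ 0^'- --> l.
Proof.
move=> cv A /cv /nbhs_ballP [e e0 H].
by exists e => //= y ye /lt_eqF/negbT; exact: H.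
Qed.

Lemma powR_quot (R : realType) (a : R) :
  (fun h : R => h^-1 *: (((@powR R) ^~ a \o shift 1) (h *: 1) - 1 `^ a)) @ 0^' --> a.
Proof.
have d : derivable ((@powR R) ^~ a) 1 1.
  by apply: derivable_powR; rewrite in_itv /= ltr01.
have E : 'D_1 ((@powR R) ^~ a) 1 = a.
  by rewrite -derive1E powR_derive1 ?in_itv /= ?ltr01 // powR1 mulr1.
rewrite -[X in _ --> X]E.
exact: d.
Qed.

Lemma euler (R : realType) (n : nat) (G : 'rV[R]_n -> R) (a : R) :
  (forall (s : seq 'I_n) (i : 'I_n) x, pos_orthant x ->
     derivable (mpartial s G) x (unitv R i)) ->
  (forall (s : seq 'I_n) x, pos_orthant x -> uniq s -> (0 < size s)%N ->
     if odd (size s) then 0 <= mpartial s G x else mpartial s G x <= 0) ->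
  (forall x (t : R), nonneg_orthant x -> 0 < t -> G (t *: x) = t `^ a * G x) ->
  forall x, pos_orthant x ->
    \sum_(k < n) x ord0 k * partial k G x = a * G x.
Proof.
move=> Hd H3 Hh x px.
set S := \sum_(k < n) x ord0 k * partial k G x.
set X := \sum_(k < n) x ord0 k.
have X0 : 0 <= X by apply: sumr_ge0 => k _; exact: ltW.
have nx : nonneg_orthant x by move=> j; exact: ltW.
pose Qf := fun h : R => h^-1 *: (((@powR R) ^~ a \o shift 1) (h *: 1) - 1 `^ a) * G x.
have cvQ : Qf @ 0^' --> a * G x by apply: cvgMr_tmp; exact: powR_quot.
have QE hh : -1 < hh -> hh != 0 -> Qf hh = hh^-1 * (G ((1 + hh) *: x) - G x).
  move=> h1 h0; rewrite /Qf /= Hh //; last by lra.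
  rewrite [_%:A]mulr1 powR1 (addrC hh).
  change (hh^-1 * ((1 + hh) `^ a - 1) * G x = hh^-1 * ((1 + hh) `^ a * G x - G x)); ring.
have tele hh : G ((1 + hh) *: x) - G x =
    \sum_(k < n) (G (pathv x hh k.+1) - G (pathv x hh k)).
  by rewrite -[RHS](big_mkord xpredT (fun k => G (pathv x hh k.+1) - G (pathv x hh k))) telescope_sumr // pathvn pathv0.
have key eps : 0 < eps -> a * G x <= S + eps * X /\ S - eps * X <= a * G x.
  move=> e0.
  have Hk k : \forall hh \near (0:R), forall c, `|c| <= `|hh| * x ord0 k ->
      `|partial k G x - partial k G (x + c *: unitv R k)| < eps.
    have p0 : pos_orthant (x + 0 *: unitv R k) by rewrite scale0r addr0.
    have dk := @line_is_derive R n (partial k G) x k 0 (Hd [:: k] k _ p0).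
    have [dd _] := dk.
    have ct : {for 0, continuous (fun t : R => partial k G (x + t *: unitv R k))}.
      by apply: differentiable_continuous; apply/derivable1_diffP.
    have := (cvgrPdist_lt _ _).1 ct eps e0.
    rewrite scale0r addr0 => /(_ (nbhs_filter _)) /nbhs_ballP [d d0 Hd'].
    have xk := px k.
    have d1 : 0 < d / (x ord0 k + 1) by apply: divr_gt0 => //; lra.
    apply: filterS (nbhs0_lt d1) => hh hh_lt c hc.
    apply: Hd'; rewrite /ball /= sub0r normrN.
    rewrite ltr_pdivlMr ?mulrDr ?mulr1 in hh_lt; last by lra.
    have := normr_ge0 hh; lra.
  have Hall : \forall hh \near (0:R), forall k : 'I_n, forall c, `|c| <= `|hh| * x ord0 k ->
      `|partial k G x - partial k G (x + c *: unitv R k)| < eps.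
    exact: (filter_forall (nbhs_filter _) Hk).
  have H1 : \forall hh \near (0:R), -1 < hh.
    apply: filterS (nbhs0_lt ltr01) => hh; rewrite ltr_norml; lra.
  split.
  - apply: (cvgr_to_le (dnbhs_right cvQ)).
    near=> hh.
    have hpos : 0 < hh by near: hh; exact: nbhs_right_gt.
    have h1 : -1 < hh by near: hh; apply: cvg_within; exact: H1.
    have Hc : forall k : 'I_n, forall c, `|c| <= `|hh| * x ord0 k ->
      `|partial k G x - partial k G (x + c *: unitv R k)| < eps.
      by near: hh; apply: cvg_within; exact: Hall.
    rewrite QE ?gt_eqF // ler_pdivrMl // tele.
    apply: le_trans (ler_sum _ (fun k _ => (term_bound Hd H3 px h1 (Hc k)).1 hpos)) _.
    rewrite /S /X mulr_sumr -big_split /= mulr_sumr le_eqVlt; apply/orP; left; apply/eqP.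
    by apply/eqP; rewrite eq_sym; apply/eqP; apply: eq_bigr => k _; ring.
  - apply: (cvgr_to_ge (dnbhs_left cvQ)).
    near=> hh.
    have hneg : hh < 0 by near: hh; exact: nbhs_left_lt.
    have h1 : -1 < hh by near: hh; apply: cvg_within; exact: H1.
    have Hc : forall k : 'I_n, forall c, `|c| <= `|hh| * x ord0 k ->
      `|partial k G x - partial k G (x + c *: unitv R k)| < eps.
      by near: hh; apply: cvg_within; exact: Hall.
    rewrite QE ?lt_eqF // tele.
    have : \sum_(k < n) (G (pathv x hh k.+1) - G (pathv x hh k)) <= hh * (S - eps * X).
      apply: le_trans (ler_sum _ (fun k _ => (term_bound Hd H3 px h1 (Hc k)).2 hneg)) _.
      rewrite /S /X mulr_sumr -sumrB /= mulr_sumr le_eqVlt; apply/orP; left; apply/eqP.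
      by apply: eq_bigr => k _; ring.
    have hi : hh^-1 <= 0 by rewrite ltW // invr_lt0.
    move=> /(ler_wnM2l hi).
    by rewrite mulrA mulVf ?lt_eqF // mul1r.
  Unshelve. all: end_near.
have epsX e : 0 < e -> 0 < e / (X + 1) /\ e / (X + 1) * X <= e.
  move=> e0; have X1 : 0 < X + 1 by lra.
  split; first exact: divr_gt0.
  rewrite mulrAC ler_pdivrMr // ler_pM2l //; lra.
apply/eqP; rewrite eq_le; apply/andP; split; apply/ler_addgt0Pr => e e0.
- have [p1 p2] := epsX e e0; have [_ k2] := key _ p1; lra.
- have [p1 p2] := epsX e e0; have [k1 _] := key _ p1; lra.
Qed.

Unset Implicit Arguments.

Theorem proposition1 (R : realType) (n : nat) (mu Ct : R)
  (G : 'rV[R]_n -> R) :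
  0 < mu ->
  (* G maps R^n_+ into R_+ *)
  (forall x, nonneg_orthant x -> 0 <= G x) ->
  (* smoothness: all iterated partial derivatives exist on the open orthant *)
  (forall (s : seq 'I_n) (i : 'I_n) x, pos_orthant x ->
     derivable (mpartial s G) x (unitv R i)) ->
  (* (G1) homogeneity of degree 1/mu *)
  (forall x (t : R), nonneg_orthant x -> 0 < t ->
     G (t *: x) = t `^ (mu^-1) * G x) ->
  (* (G2) G x -> +oo as x^(i) -> +oo *)
  (forall x (i : 'I_n), nonneg_orthant x ->
     G (x + t *: unitv R i) @[t --> +oo] --> +oo) ->
  (* (G3) sign conditions on mixed partials w.r.t. k distinct variables *)
  (forall (s : seq 'I_n) x, pos_orthant x -> uniq s -> (0 < size s)%N ->
     if odd (size s) then 0 <= mpartial s G x else mpartial s G x <= 0) ->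
  -1 < Ct ->
  (forall (i : 'I_n) x, pos_orthant x ->
     mpartial [:: i; i] G x * x ord0 i <= Ct * mpartial [:: i] G x) ->
  forall x, pos_orthant x ->
    \sum_(i < n) mpartial [:: i; i] G x * (x ord0 i) ^+ 2 <= (Ct / mu) * G x.
Proof.
move=> mu0 G0 Hd Hh G2 H3 Ct1 Hi x px.
have EU : \sum_(i < n) x ord0 i * mpartial [:: i] G x = mu^-1 * G x.
  exact: (euler Hd H3 Hh px).
apply: (@le_trans _ _ (\sum_(i < n) Ct * (x ord0 i * mpartial [:: i] G x))).
  apply: ler_sum => i _.
  have := Hi i x px; have xi := px i.
  move=> /(ler_wpM2r (ltW xi)) h.
  have e1 : mpartial [:: i; i] G x * x ord0 i ^+ 2
          = mpartial [:: i; i] G x * x ord0 i * x ord0 i by ring.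
  have e2 : Ct * (x ord0 i * mpartial [:: i] G x)
          = Ct * mpartial [:: i] G x * x ord0 i by ring.
  by rewrite e1 e2.
by rewrite -mulr_sumr EU mulrA.
Qed.
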